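(* The Lie algebra $\operatorname{Ker}\psi_1$, with the bracket $[(a,\gamma),(b,\varepsilon)]=(b,\varepsilon^{(a,\gamma)})-(a,\gamma^{(b,\varepsilon)})$, is isomorphic to the Lie algebra $\operatorname{Der}_{E^e}(\Lambda)$ of derivations of $\Lambda$ which are $E$-bimodule morphisms, with the commutator bracket.
   Context: Let $k$ be an algebraically closed field and $Q$ a finite quiver; $Q_n$ is the set of paths of length $n$ ($Q_0$ = vertices, $Q_1$ = arrows), $s(\gamma),t(\gamma)$ are source and terminus of a path $\gamma$; in $kQ$, $\beta\alpha$ is the concatenation ''first $\alpha$, then $\beta$'' if $t(\alpha)=s(\beta)$, and $0$ otherwise. Let $Z$ be a minimal set of paths of length $\ge 2$ (no proper subpath of an element of $Z$ lies in $Z$) such that $\Lambda=kQ/\langle Z\rangle$ is finite dimensional, and let $E\subset\Lambda$ be the subalgebra spanned by the (classes of the) vertices. Let $B$ be the set of paths (vertices included) not containing any element of $Z$ as a subpath; its classes form a basis of $\Lambda$. Paths are parallel if they have the same source and terminus; for sets of paths $X,Y$, $X//Y$ is the set of pairs $(\varepsilon,\gamma)\in X\times Y$ of parallel paths and $k(X//Y)$ the vector space with basis $X//Y$. For a path $\varepsilon$ and $(a,\gamma)\in Q_1//B$, $\varepsilon^{(a,\gamma)}$ is the sum of all paths in $B$ obtained by replacing one occurrence of $a$ in $\varepsilon$ by $\gamma$ ($0$ if none); if $\varepsilon^{(a,\gamma)}=\sum_i\varepsilon_i$ and $\eta$ is parallel to $\varepsilon$, $(\eta,\varepsilon^{(a,\gamma)}):=\sum_i(\eta,\varepsilon_i)$.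 The map $\psi_1:k(Q_1//B)\to k(Z//B)$ is $(a,\gamma)\mapsto\sum_{p\in Z}(p,p^{(a,\gamma)})$, and the bracket on $k(Q_1//B)$ is extended bilinearly from basis elements; $\operatorname{Ker}\psi_1$ is closed under it. *)

(* Defs.v *)
From HB Require Import structures.
From mathcomp Require Import all_boot all_order all_algebra.
Set Implicit Arguments. Unset Strict Implicit. Unset Printing Implicit Defensive.
Import GRing.Theory.
Local Open Scope ring_scope.

(* A path of a finite quiver (V, A, s, t) is encoded as a pair
   (source vertex, list of arrows in the order they are traversed);
   the trivial path e_v is (v, [::]).  In the paper's notation the path
   a_n ... a_2 a_1 (first a_1) is (s a_1, [:: a_1; a_2; ...; a_n]). *)
Definition qpath (V A : finType) := (V * seq A)%type.

Section Quiver.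
Variables (k : fieldType) (V A : finType) (s t : A -> V).

Definition tgt (p : qpath V A) : V := last p.1 (map t p.2).
Definition valid (p : qpath V A) : bool :=
  if p.2 is a :: l then (s a == p.1) && path (fun a b => t a == s b) a l
  else true.
Definition parallel (p q : qpath V A) : bool :=
  (p.1 == q.1) && (tgt p == tgt q).
Definition arrow_path (a : A) : qpath V A := (s a, [:: a]).

Variable Z : seq (qpath V A).

(* B: valid paths containing no element of Z as a subpath
   (elements of Z have length >= 2, so "subpath" = contiguous arrow sublist) *)
Definition inB (p : qpath V A) : bool :=
  valid p && all (fun z => ~~ infix z.2 p.2) Z.

(* N: a bound on the lengths of paths in B (exists since Lambda is finite
   dimensional); used only to enumerate B as a finite type. *)
Variable N : nat.

Fixpoint seqs_upto (n : nat) : seq (seq A) :=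
  if n is m.+1 then [::] :: [seq a :: l | a <- enum A, l <- seqs_upto m]
  else [:: [::]].
Definition allpaths : seq (qpath V A) :=
  [seq (v, l) | v <- enum V, l <- seqs_upto N].
Definition Bseq : seq (qpath V A) := filter inB allpaths.
Definition Btype : finType := seq_sub Bseq.

(* Lambda = kQ/<Z>, as the k-vector space with basis B *)
Local Notation Lam := {ffun Btype -> k^o}.

Definition coef (x : Lam) (q : qpath V A) : k :=
  oapp x 0 (insub q : option Btype).

Definition prefix (p : qpath V A) (i : nat) : qpath V A := (p.1, take i p.2).
Definition suffix (p : qpath V A) (i : nat) : qpath V A :=
  (tgt (prefix p i), drop i p.2).

(* product of Lambda: for basis paths, beta * alpha = beta alpha (first alpha)
   if it is a path in B, 0 otherwise; so the coefficient of p in x * y is the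
   sum over the factorizations p = beta alpha of x_beta y_alpha. *)
Definition lmul (x y : Lam) : Lam :=
  [ffun b : Btype => \sum_(i < (size (val b).2).+1)
      coef x (suffix (val b) i) * coef y (prefix (val b) i)].

Definition inE (e : Lam) : Prop :=
  forall b : Btype, (val b).2 != [::] -> e b = 0.

Definition isDer (d : Lam -> Lam) : Prop :=
  [/\ (forall (c : k) (x y : Lam), d (c *: x + y) = c *: d x + d y),
      (forall x y, d (lmul x y) = lmul (d x) y + lmul x (d y)) &
      (forall e x, inE e -> d (lmul e x) = lmul e (d x)
                          /\ d (lmul x e) = lmul (d x) e)].

Definition bvec (q : qpath V A) : Lam := [ffun b : Btype => (val b == q)%:R].

Definition replace (p : qpath V A) (i : nat) (g : qpath V A) : qpath V A :=
  (p.1, take i p.2 ++ g.2 ++ drop i.+1 p.2).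

Definition repl (eps : qpath V A) (a : A) (g : qpath V A) : Lam :=
  \sum_(i < size eps.2 | nth a eps.2 i == a) bvec (replace eps i g).

(* k(Q1//B): functions on A * B vanishing on non-parallel pairs *)
Local Notation QB := {ffun (A * Btype)%type -> k^o}.
Definition inQB (f : QB) : Prop :=
  forall (a : A) (g : Btype), ~~ parallel (arrow_path a) (val g) -> f (a, g) = 0.

(* (b, x) for x in Lambda, extended linearly in x *)
Definition pairQ (b : A) (x : Lam) : QB :=
  [ffun q : A * Btype => if q.1 == b then x q.2 else 0].

(* the bracket, extended bilinearly from
   [(a,g),(b,eps)] = (b, eps^(a,g)) - (a, g^(b,eps)) *)
Definition bracket (f g : QB) : QB :=
  \sum_(q1 : A * Btype) \sum_(q2 : A * Btype)
    (f q1 * g q2) *: (pairQ q2.1 (repl (val q2.2) q1.1 (val q1.2))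
                      - pairQ q1.1 (repl (val q1.2) q2.1 (val q2.2))).

Definition Ztype : finType := seq_sub Z.
Local Notation ZB := {ffun (Ztype * Btype)%type -> k^o}.
Definition pairZ (p : Ztype) (x : Lam) : ZB :=
  [ffun q : Ztype * Btype => if q.1 == p then x q.2 else 0].

Definition psi1 (f : QB) : ZB :=
  \sum_(q : A * Btype) f q *: \sum_(p : Ztype) pairZ p (repl (val p) q.1 (val q.2)).

Definition inKer (f : QB) : Prop := inQB f /\ psi1 f = 0.

End Quiver.

Notation Lam k s t Z N := {ffun Btype s t Z N -> k^o}.
Notation QB k s t Z N := {ffun (_ * Btype s t Z N)%type -> k^o}.
Notation ZB k s t Z N := {ffun (Ztype Z * Btype s t Z N)%type -> k^o}.

(* Main.v *)
Require Import Defs.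
From HB Require Import structures.
From mathcomp Require Import all_boot all_order all_algebra.
Set Implicit Arguments. Unset Strict Implicit.
Import GRing.Theory.
Local Open Scope ring_scope.

Section Proof.
Variables (k : fieldType) (V A : finType) (s t : A -> V) (Z : seq (qpath V A)) (N : nat).
Hypothesis HfinB : forall p, inB s t Z p -> (size p.2 < N)%N.

Local Notation Lam := {ffun Btype s t Z N -> k^o}.
Local Notation BT := (Btype s t Z N).
Local Notation bv := (bvec k s t Z N).
Local Notation lm := (@lmul k V A s t Z N).
Local Notation P := (qpath V A).
Local Notation valid := (valid s t).
Local Notation inB := (inB s t Z).
Local Notation tgt := (tgt t).

Definition pcat (p q : P) : P := (p.1, p.2 ++ q.2).

Lemma mem_seqs_upto n (l : seq A) : (size l <= n)%N -> l \in seqs_upto A n.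
Proof.
elim: n l => [|n IH] [|a l] //= H; rewrite ?in_cons ?eqxx //.
by rewrite (allpairs_f (fun a l => a :: l)) ?orbT // ?mem_enum // IH.
Qed.

Lemma inB_Bseq p : inB p -> p \in Defs.Bseq s t Z N.
Proof.
move=> H; rewrite mem_filter H /=; case: p H => v l H.
apply: (allpairs_f pair); first by rewrite mem_enum.
by apply: mem_seqs_upto; exact: ltnW (HfinB H). 
Qed.

Lemma Bseq_inB p : p \in Defs.Bseq s t Z N -> inB p.
Proof. by rewrite mem_filter => /andP[]. Qed.

Lemma BinB (b : BT) : inB (val b).
Proof. by apply: Bseq_inB; exact: (valP b). Qed.

Lemma bvec_out q : ~~ inB q -> bv q = 0.
Proof.
move=> H; apply/ffunP => b; rewrite !ffunE.
case: eqP => // E; by have := BinB b; rewrite E (negbTE H).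
Qed.

Lemma coef_bvec q r : inB r -> coef (bv q) r = (r == q)%:R.
Proof.
move=> H; rewrite /coef (insubT (mem (Defs.Bseq s t Z N)) (inB_Bseq H)) /=.
by rewrite ffunE SubK.
Qed.

Lemma tgt_cat v l1 l2 : tgt (v, l1 ++ l2) = tgt (tgt (v, l1), l2).
Proof. by rewrite /Defs.tgt /= map_cat last_cat. Qed.

Lemma valid_cat v l1 l2 :
  valid (v, l1 ++ l2) = valid (v, l1) && valid (tgt (v, l1), l2).
Proof.
case: l1 => [|a l1] /=; first by [].
rewrite /Defs.valid /= cat_path -andbA; congr (_ && (_ && _)).
rewrite /Defs.tgt /= last_map.
by case: l2 => [|b l2] //=; rewrite eq_sym.
Qed.

Lemma inB_cat v l1 l2 :
  inB (v, l1 ++ l2) -> inB (v, l1) && inB (tgt (v, l1), l2).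
Proof.
rewrite /Defs.inB valid_cat => /andP[/andP[H1 H2] H3].
rewrite H1 H2 /=; apply/andP; split; apply/allP => z Hz; apply/negP => Hi;
  move/allP: H3 => /(_ z Hz); rewrite /= => /negP; apply.
- by apply: (infix_trans Hi); apply: prefix_infix.
- by apply: (infix_trans Hi); apply: suffix_infix.
Qed.

Lemma inB_prefix p i : inB p -> inB (Defs.prefix p i).
Proof.
case: p => v l; rewrite -{1}(cat_take_drop i l) => /inB_cat /andP[] //.
Qed.

Lemma inB_suffix p i : inB p -> inB (Defs.suffix t p i).
Proof.
case: p => v l; rewrite -{1}(cat_take_drop i l) => /inB_cat /andP[] //.
Qed.

Lemma lmul_bvec (a b : P) :
  lm (bv b) (bv a) = if tgt a == b.1 then bv (a.1, a.2 ++ b.2) else 0.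
Proof.
apply/ffunP => c; rewrite ffunE.
have HB := BinB c.
have claim : forall i : nat, (i <= size (val c).2)%N ->
  coef (bv b) (Defs.suffix t (val c) i) * coef (bv a) (Defs.prefix (val c) i)
  = ((i == size a.2 :> nat) && (tgt a == b.1) && (val c == (a.1, a.2 ++ b.2)))%:R.
  move=> i Hi; rewrite (coef_bvec _ (inB_suffix _ HB)) (coef_bvec _ (inB_prefix _ HB)).
  rewrite -natrM mulnb; congr (_ %:R); congr nat_of_bool.
  move: Hi; case: (val c) => v l; case: a => av al; case: b => bv0 bl /= Hi.
  rewrite /Defs.suffix /Defs.prefix /= !xpair_eqE.
  apply/idP/idP.
  - move=> /andP[/andP[/eqP T /eqP D] /andP[/eqP V0 /eqP Tk]].
    by subst; rewrite size_takel // !eqxx cat_take_drop eqxx.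
  - move=> /andP[/andP[/eqP Hs /eqP T] /andP[/eqP E1 /eqP E2]].
    by subst; rewrite take_size_cat // drop_size_cat // !eqxx.
rewrite (eq_bigr (fun i : 'I_(size (val c).2).+1 => ((i == size a.2 :> nat) && (tgt a == b.1) && (val c == (a.1, a.2 ++ b.2)))%:R)); last by move=> i _; rewrite claim // -ltnS.
case: (tgt a == b.1); last by rewrite ffunE /= big1 // => i _; rewrite andbF.
rewrite ffunE.
case E: (val c == (a.1, a.2 ++ b.2)); last by rewrite /= big1 // => i _; rewrite andbF.
have Hs : (size a.2 < (size (val c).2).+1)%N.
  by rewrite (eqP E) /= size_cat ltnS leq_addr.
rewrite (bigD1 (Ordinal Hs)) //= eqxx /= big1 ?addr0 // => i Hi.
rewrite !andbT; case: eqP => // Hi'; exfalso; move: Hi; apply/negP; rewrite negbK.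
by apply/eqP/val_inj.
Qed.



Lemma coefD x y r : coef (x + y : Lam) r = coef x r + coef y r.
Proof. by rewrite /coef; case: insub => [b|] //=; rewrite ?ffunE ?addr0. Qed.

Lemma coefZ c (x : Lam) r : coef (c *: x) r = c * coef x r.
Proof. by rewrite /coef; case: insub => [b|] //=; rewrite ?ffunE ?mulr0. Qed.

Lemma coef0 r : coef (0 : Lam) r = 0.
Proof. by rewrite /coef; case: insub => [b|] //=; rewrite ?ffunE. Qed.

Lemma lmulDl (x y z : Lam) : lm (x + y) z = lm x z + lm y z.
Proof.
apply/ffunP => b; rewrite !ffunE -big_split; apply: eq_bigr => i _.
by rewrite coefD mulrDl.
Qed.

Lemma lmulDr (x y z : Lam) : lm z (x + y) = lm z x + lm z y.
Proof.
apply/ffunP => b; rewrite !ffunE -big_split; apply: eq_bigr => i _.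
by rewrite coefD mulrDr.
Qed.

Lemma lmulZl c (x z : Lam) : lm (c *: x) z = c *: lm x z.
Proof.
apply/ffunP => b; rewrite !ffunE /GRing.scale /= mulr_sumr; apply: eq_bigr => i _.
by rewrite coefZ mulrA.
Qed.

Lemma lmulZr c (x z : Lam) : lm z (c *: x) = c *: lm z x.
Proof.
apply/ffunP => b; rewrite !ffunE /GRing.scale /= mulr_sumr; apply: eq_bigr => i _.
by rewrite coefZ mulrCA.
Qed.

Lemma lmul0l (z : Lam) : lm 0 z = 0.
Proof. by apply/ffunP => b; rewrite !ffunE big1 // => i _; rewrite coef0 mul0r. Qed.

Lemma lmul0r (z : Lam) : lm z 0 = 0.
Proof. by apply/ffunP => b; rewrite !ffunE big1 // => i _; rewrite coef0 mulr0. Qed.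

Lemma lmul_suml (I : Type) (r : seq I) (Pr : pred I) (F : I -> Lam) z :
  lm (\sum_(i <- r | Pr i) F i) z = \sum_(i <- r | Pr i) lm (F i) z.
Proof.
apply: (big_rec2 (fun u v => lm v z = u)); first by rewrite lmul0l.
by move=> i u v _ <-; rewrite lmulDl.
Qed.

Lemma lmul_sumr (I : Type) (r : seq I) (Pr : pred I) (F : I -> Lam) z :
  lm z (\sum_(i <- r | Pr i) F i) = \sum_(i <- r | Pr i) lm z (F i).
Proof.
apply: (big_rec2 (fun u v => lm z v = u)); first by rewrite lmul0r.
by move=> i u v _ <-; rewrite lmulDr.
Qed.

Lemma expand (x : Lam) : x = \sum_(b : BT) x b *: bv (val b).
Proof.
apply/ffunP => c; rewrite sum_ffunE (bigD1 c) //= big1 ?addr0.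
  by rewrite !ffunE eqxx /GRing.scale /= mulr1.
move=> b Hb; rewrite !ffunE /GRing.scale /=.
by case: eqP => [/val_inj E|]; [rewrite E eqxx in Hb | rewrite mulr0].
Qed.

Lemma lmul_expand (x y : Lam) :
  lm x y = \sum_(b : BT) \sum_(b' : BT) (x b * y b') *: lm (bv (val b)) (bv (val b')).
Proof.
rewrite {1}(expand x) lmul_suml; apply: eq_bigr => b _.
rewrite lmulZl {1}(expand y) lmul_sumr scaler_sumr; apply: eq_bigr => b' _.
by rewrite lmulZr scalerA.
Qed.

Lemma lmulA_bvec (a b g : P) :
  lm (lm (bv g) (bv b)) (bv a) = lm (bv g) (lm (bv b) (bv a)).
Proof.
case: a => av al; case: b => bv0 bl; case: g => gv gl.
rewrite !lmul_bvec /=.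
case E1: (tgt (bv0, bl) == gv); case E2: (tgt (av, al) == bv0);
  rewrite ?lmul0l ?lmul0r //; rewrite !lmul_bvec /= ?E2 ?tgt_cat ?(eqP E2) ?E1 ?catA //.
Qed.

Lemma lmul_exl (x u : Lam) : lm x u = \sum_(b : BT) x b *: lm (bv (val b)) u.
Proof.
by rewrite [in LHS](expand x) lmul_suml; apply: eq_bigr => b _; rewrite lmulZl.
Qed.

Lemma lmul_exr (x u : Lam) : lm u x = \sum_(b : BT) x b *: lm u (bv (val b)).
Proof.
by rewrite [in LHS](expand x) lmul_sumr; apply: eq_bigr => b _; rewrite lmulZr.
Qed.

Lemma lmulA (x y z : Lam) : lm (lm x y) z = lm x (lm y z).
Proof.
rewrite (lmul_exl x y) lmul_suml [in RHS](lmul_exl x); apply: eq_bigr => b _.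
rewrite lmulZl; congr (_ *: _).
rewrite (lmul_exr y) (lmul_exl y) lmul_suml lmul_sumr; apply: eq_bigr => b' _.
rewrite lmulZl lmulZr; congr (_ *: _).
rewrite (lmul_exr z) [in RHS](lmul_exr z) lmul_sumr; apply: eq_bigr => b'' _.
by rewrite lmulZr lmulA_bvec.
Qed.


Local Notation QB := {ffun (A * BT)%type -> k^o}.
Local Notation par := (parallel t).
Local Notation arr := (arrow_path s).
Local Notation repl := (repl k s t Z N).

Definition dA (f : QB) (a : A) : Lam :=
  \sum_(g : BT | par (arr a) (val g)) f (a, g) *: bv (val g).

Fixpoint Dl (d : A -> Lam) (v : V) (l : seq A) : Lam :=
  if l is a :: l' then lm (Dl d (t a) l') (bv (v, [:: a])) + lm (bv (t a, l')) (d a)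
  else 0.

Definition phi (f : QB) (x : Lam) : Lam :=
  \sum_(b : BT) x b *: Dl (dA f) (val b).1 (val b).2.

Lemma lmul_e_l w q : lm (bv (w, [::])) (bv q) = if tgt q == w then bv q else 0.
Proof. by case: q => v l; rewrite lmul_bvec /= cats0. Qed.

Lemma lmul_e_r w q : lm (bv q) (bv (w, [::])) = if w == q.1 then bv q else 0.
Proof. by case: q => v l; rewrite lmul_bvec /Defs.tgt /=; case: eqP => // ->. Qed.

Lemma par_arr a g : par (arr a) g = (s a == g.1) && (t a == tgt g).
Proof. by []. Qed.

Lemma sandwich a (x : Lam) :
  lm (bv (t a, [::])) (lm x (bv (s a, [::]))) =
  \sum_(g : BT | par (arr a) (val g)) x g *: bv (val g).
Proof.
rewrite (lmul_exl x) lmul_sumr [in RHS]big_mkcond; apply: eq_bigr => g _.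
rewrite lmulZr lmul_e_r par_arr.
case: (s a == (val g).1); last by rewrite lmul0r scaler0.
by rewrite lmul_e_l eq_sym; case: (t a == tgt (val g)); rewrite ?scaler0.
Qed.

Lemma dA_l f a : lm (bv (t a, [::])) (dA f a) = dA f a.
Proof.
rewrite lmul_sumr; apply: eq_bigr => g /andP[_ /eqP H].
by rewrite lmulZr lmul_e_l -H /= eqxx.
Qed.

Lemma dA_r f a : lm (dA f a) (bv (s a, [::])) = dA f a.
Proof.
rewrite lmul_suml; apply: eq_bigr => g /andP[/eqP H _].
by rewrite lmulZl lmul_e_r -H /= eqxx.
Qed.

Lemma valid_cons v a l : valid (v, a :: l) = (s a == v) && valid (t a, l).
Proof.
have -> : a :: l = [:: a] ++ l by [].
by rewrite valid_cat /Defs.valid /= andbT.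
Qed.

Lemma Dl_r d (Hd : forall a, lm (d a) (bv (s a, [::])) = d a) v l :
  valid (v, l) -> lm (Dl d v l) (bv (v, [::])) = Dl d v l.
Proof.
case: l => [|a l] /=; first by rewrite lmul0l.
rewrite valid_cons => /andP[/eqP Ha _].
rewrite lmulDl !lmulA lmul_e_r eqxx; congr (_ + _).
by rewrite -Ha Hd.
Qed.

Lemma Dl_l d v l : lm (bv (tgt (v, l), [::])) (Dl d v l) = Dl d v l.
Proof.
elim: l v => [|a l IH] v /=; first by rewrite lmul0r.
have -> : tgt (v, a :: l) = tgt (t a, l) by [].
rewrite lmulDr -!lmulA IH lmul_e_l eqxx //.
Qed.

Lemma Dl_ext d1 d2 v l : (forall a, d1 a = d2 a) -> Dl d1 v l = Dl d2 v l.
Proof.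
move=> H; elim: l v => [|a l IH] v //=; by rewrite IH H.
Qed.

Lemma Dl_lin c d1 d2 d3 v l : (forall a, d3 a = c *: d1 a + d2 a) ->
  Dl d3 v l = c *: Dl d1 v l + Dl d2 v l.
Proof.
move=> H; elim: l v => [|a l IH] v /=; first by rewrite scaler0 addr0.
rewrite IH H lmulDl lmulZl lmulDr lmulZr scalerDr.
by rewrite addrACA.
Qed.

Lemma Dl_cat d (Hd : forall a, lm (d a) (bv (s a, [::])) = d a) v l (b : P) :
  valid b -> tgt (v, l) = b.1 ->
  Dl d v (l ++ b.2) = lm (Dl d b.1 b.2) (bv (v, l)) + lm (bv b) (Dl d v l).
Proof.
case: b => bv0 bl /= Hb.
elim: l v => [|a l IH] v /= Ht.
  rewrite lmul0r addr0; have Hv : v = bv0 by rewrite -Ht.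
  by subst; rewrite Dl_r.
rewrite IH //.
have E1 : bv (v, a :: l) = lm (bv (t a, l)) (bv (v, [:: a])).
  by rewrite lmul_bvec /= eqxx.
have E2 : bv (t a, l ++ bl) = lm (bv (bv0, bl)) (bv (t a, l)).
  have Ht' : tgt (t a, l) = bv0 := Ht.
  by rewrite lmul_bvec /= Ht' eqxx.
rewrite E1 E2 lmulDl !lmulA lmulDr addrA.
done.
Qed.


Lemma repl_cons v a l b (g : P) :
  repl (v, a :: l) b g =
  (if a == b then bv (v, g.2 ++ l) else 0) + lm (repl (t a, l) b g) (bv (v, [:: a])).
Proof.
rewrite /Defs.repl big_mkcond big_ord_recl /=.
congr (_ + _).
  by case: (a == b) => //; rewrite /replace /= drop0.
rewrite [in RHS]big_mkcond lmul_suml; apply: eq_bigr => i _ /=.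
rewrite add0n /bump leq0n add1n.
case: ifP => _; last by rewrite lmul0l.
by rewrite lmul_bvec /Defs.tgt /= eqxx.
Qed.

Lemma Dl_repl f (Hf : inQB f) v l : valid (v, l) ->
  Dl (dA f) v l = \sum_(q : A * BT) f q *: repl (v, l) q.1 (val q.2).
Proof.
elim: l v => [|a l IH] v /=.
  move=> _; rewrite big1 // => q _; by rewrite /Defs.repl big_ord0 scaler0.
rewrite valid_cons => /andP[/eqP Ha Hv].
rewrite IH // lmul_suml.
under eq_bigr => q _ do rewrite repl_cons scalerDr.
rewrite big_split /= addrC; congr (_ + _).
  by apply: eq_bigr => q _; rewrite lmulZl.
rewrite lmul_sumr.
pose F := fun b (g : BT) => f (b,g) *: (if a == b then bv (v, (val g).2 ++ l) else 0).
rewrite (eq_bigr (fun q => F q.1 q.2)); last by case.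
rewrite -(pair_bigA _ F) /= (bigD1 a) //=.
rewrite [X in _ + X]big1 ?addr0; last first.
  move=> b Hb; apply: big1 => g _; by rewrite /F eq_sym (negbTE Hb) scaler0.
rewrite [in LHS]big_mkcond; apply: eq_bigr => g _; rewrite /F eqxx.
case: ifP => Hp.
  rewrite lmulZr lmul_bvec; move: Hp; rewrite par_arr => /andP[/eqP H1 /eqP H2].
  by rewrite -H2 eqxx /= -H1 Ha.
by rewrite Hf ?Hp // scale0r.
Qed.

Lemma psi1_repl f (z : Ztype Z) : psi1 f = 0 ->
  \sum_(q : A * BT) f q *: repl (val z) q.1 (val q.2) = 0.
Proof.
move=> H; apply/ffunP => b.
have E := congr1 (fun F : ZB k s t Z N => F (z, b)) H.
rewrite /psi1 sum_ffunE [in RHS]ffunE in E.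
rewrite sum_ffunE [in RHS]ffunE -[in RHS]E.
apply: eq_bigr => q _.
rewrite [in RHS]ffunE [in RHS]sum_ffunE (bigD1 z) //= [X in _ + X]big1 ?addr0.
  by rewrite !ffunE /= eqxx.
by move=> p Hp; rewrite ffunE /= eq_sym (negbTE Hp).
Qed.


Hypothesis HZvalid : forall z, z \in Z -> valid z.
Hypothesis HZlen : forall z, z \in Z -> (2 <= size z.2)%N.

Lemma notB_infix (z q : P) : z \in Z -> infix z.2 q.2 -> ~~ inB q.
Proof.
move=> Hz Hi; rewrite /Defs.inB negb_and; apply/orP; right.
by apply/allPn; exists z => //; rewrite negbK.
Qed.

Lemma Dl_ker f (Hf : inQB f) (Hp : psi1 f = 0) v l :
  valid (v, l) -> ~~ inB (v, l) -> Dl (dA f) v l = 0.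
Proof.
move=> Hv HB.
have [z Hz Hi] : exists2 z, z \in Z & infix z.2 l.
  move: HB; rewrite /Defs.inB Hv /= => /allPn [z Hz]; rewrite negbK => Hi.
  by exists z.
case/infixP: Hi => l1 [l2 El]; subst l.
move: Hv; rewrite valid_cat => /andP[Hv1 Hv2].
set T := tgt (v, l1).
rewrite (Dl_cat (dA_r f) (b := (T, z.2 ++ l2))) //=.
rewrite (bvec_out (notB_infix (q := (T, z.2 ++ l2)) Hz (prefix_infix _ _))).
rewrite [X in _ + X](_ : _ = 0) ?addr0; last exact: lmul0l.
suff -> : Dl (dA f) T (z.2 ++ l2) = 0 by exact: lmul0l.
move: Hv2; rewrite valid_cat => /andP[Hz1 Hz2].
rewrite (Dl_cat (dA_r f) (b := (tgt (T, z.2), l2))) //=.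
rewrite (bvec_out (notB_infix (q := (T, z.2)) Hz (infix_refl _))).
rewrite [X in X + _](_ : _ = 0) ?add0r; last exact: lmul0r.
suff -> : Dl (dA f) T z.2 = 0 by exact: lmul0r.
clear HB.
have Ez : (T, z.2) = z.
  have := HZvalid Hz; have := HZlen Hz; move: Hz1.
  case: z {Hz Hz2} => zv [|a zl] //= Hz1 _.
  rewrite valid_cons => /andP[/eqP <- _].
  by move: Hz1; rewrite valid_cons => /andP[/eqP -> _].
rewrite Dl_repl // Ez.
by have := psi1_repl (Sub z Hz : Ztype Z) Hp; rewrite SubK => ->.
Qed.


Definition lin (d : Lam -> Lam) :=
  forall (c : k) (x y : Lam), d (c *: x + y) = c *: d x + d y.

Section Lin.
Variable d : Lam -> Lam.
Hypothesis Hd : lin d.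

Lemma lin0 : d 0 = 0.
Proof.
have H := Hd 1 0 0; rewrite scaler0 addr0 scale1r in H.
by apply: (addrI (d 0)); rewrite addr0 -H.
Qed.

Lemma linD x y : d (x + y) = d x + d y.
Proof. by have := Hd 1 x y; rewrite !scale1r. Qed.

Lemma linZ c x : d (c *: x) = c *: d x.
Proof. by have := Hd c x 0; rewrite !addr0 lin0 addr0. Qed.

Lemma linN x : d (- x) = - d x.
Proof. by rewrite -scaleN1r linZ scaleN1r. Qed.

Lemma linB x y : d (x - y) = d x - d y.
Proof. by rewrite linD linN. Qed.

Lemma linsum (I : Type) (r : seq I) (Pr : pred I) (F : I -> Lam) :
  d (\sum_(i <- r | Pr i) F i) = \sum_(i <- r | Pr i) d (F i).
Proof.
apply: (big_rec2 (fun u v => d v = u)); first exact: lin0.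
by move=> i u v _ <-; rewrite linD.
Qed.

Lemma lin_expand x : d x = \sum_(b : BT) x b *: d (bv (val b)).
Proof.
by rewrite [in LHS](expand x) linsum; apply: eq_bigr => b _; rewrite linZ.
Qed.
End Lin.

Lemma lmulNl (x z : Lam) : lm (- x) z = - lm x z.
Proof. by rewrite -scaleN1r lmulZl scaleN1r. Qed.

Lemma lmulNr (x z : Lam) : lm z (- x) = - lm z x.
Proof. by rewrite -scaleN1r lmulZr scaleN1r. Qed.

Lemma lmulBl (x y z : Lam) : lm (x - y) z = lm x z - lm y z.
Proof. by rewrite lmulDl lmulNl. Qed.

Lemma lmulBr (x y z : Lam) : lm z (x - y) = lm z x - lm z y.
Proof. by rewrite lmulDr lmulNr. Qed.

Lemma phi_lin f : lin (phi f).
Proof.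
move=> c x y; rewrite /phi scaler_sumr -big_split; apply: eq_bigr => b _.
by rewrite !ffunE scalerDl scalerA.
Qed.

Lemma phi_bvec f q : phi f (bv q) = if inB q then Dl (dA f) q.1 q.2 else 0.
Proof.
rewrite /phi; case: ifP => H.
  rewrite (bigD1 (Sub q (inB_Bseq H) : BT)) //= big1 ?addr0.
    by rewrite ffunE SubK eqxx scale1r.
  move=> b Hb; rewrite ffunE; case: eqP => E; last by rewrite scale0r.
  by exfalso; move/negP: Hb; apply; apply/eqP/val_inj; rewrite SubK.
apply: big1 => b _; rewrite ffunE; case: eqP => E; last by rewrite scale0r.
by have := BinB b; rewrite E H.
Qed.

Lemma phi_Dl f (Hf : inQB f) (Hp : psi1 f = 0) q :
  valid q -> phi f (bv q) = Dl (dA f) q.1 q.2.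
Proof.
move=> Hv; rewrite phi_bvec; case: ifP => // H.
by case: q Hv H => v l Hv H; rewrite Dl_ker // H.
Qed.

Lemma phi_ex f x : phi f x = \sum_(b : BT) x b *: phi f (bv (val b)).
Proof. by apply: eq_bigr => b _; rewrite phi_bvec BinB. Qed.

Lemma inB_valid q : inB q -> valid q.
Proof. by case/andP. Qed.

Lemma phi_key f (Hf : inQB f) (Hp : psi1 f = 0) (b a : P) :
  inB b -> inB a ->
  phi f (lm (bv b) (bv a)) = lm (phi f (bv b)) (bv a) + lm (bv b) (phi f (bv a)).
Proof.
move=> /inB_valid Hb /inB_valid Ha.
rewrite (phi_Dl Hf Hp Hb) (phi_Dl Hf Hp Ha) lmul_bvec.
case: b Hb => bv0 bl Hb; case: a Ha => av al Ha /=.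
case: eqP => E.
  rewrite phi_Dl //=; last by rewrite valid_cat Ha E Hb.
  by rewrite (Dl_cat (dA_r f) (b := (bv0, bl))).
rewrite lin0; last exact: phi_lin.
rewrite -[X in lm X _](Dl_r (dA_r f) Hb) lmulA lmul_e_l.
rewrite -[Dl (dA f) av al](Dl_l _ av al) -lmulA lmul_e_r.
have /negbTE -> : tgt (av, al) != bv0 by apply/eqP.
by rewrite lmul0r lmul0l addr0.
Qed.

Lemma phi_leib f (Hf : inQB f) (Hp : psi1 f = 0) x y :
  phi f (lm x y) = lm (phi f x) y + lm x (phi f y).
Proof.
rewrite (lmul_expand x y) (linsum (phi_lin f)).
under eq_bigr => b _ do rewrite (linsum (phi_lin f)).
rewrite (phi_ex f x) (phi_ex f y) lmul_suml (lmul_exl x) -big_split.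
apply: eq_bigr => b _ /=.
rewrite lmulZl (lmul_exr y) lmul_sumr.
rewrite !scaler_sumr -big_split.
apply: eq_bigr => b' _ /=.
rewrite (linZ (phi_lin f)) phi_key ?BinB // lmulZr !scalerA scalerDr.
done.
Qed.

Lemma phi_E f e : Defs.inE e -> phi f e = 0.
Proof.
move=> He; rewrite /phi big1 // => b _.
have Hb := He b.
case: b Hb => [[v [|a l]] Hin] /= Hb; first by rewrite scaler0.
by rewrite Hb // scale0r.
Qed.

Lemma phi_der f : inKer f -> isDer (phi f).
Proof.
case=> Hf Hp; split.
- exact: phi_lin.
- exact: phi_leib.
- move=> e x He; rewrite !phi_leib // phi_E // lmul0l add0r lmul0r addr0.
  done.
Qed.


Lemma inE_e w : Defs.inE (bv (w, [::])).
Proof. by move=> b Hb; rewrite ffunE; case: eqP => // E; rewrite E in Hb. Qed.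

Lemma isDer_lin d : isDer d -> lin d.
Proof. by case. Qed.

Lemma Dl_repl' f (Hf : inQB f) p : valid p ->
  Dl (dA f) p.1 p.2 = \sum_(q : A * BT) f q *: repl p q.1 (val q.2).
Proof. by case: p => v l; apply: Dl_repl. Qed.

Section Der.
Variable d : Lam -> Lam.
Hypothesis Hd : isDer d.

Lemma der_e w : d (bv (w, [::])) = 0.
Proof.
case: Hd => Hlin Hleib HE.
set e := bv (w, [::]).
have ee : lm e e = e by rewrite /e lmul_e_l /Defs.tgt /= eqxx.
have [H1 H2] := HE e e (inE_e w).
have H3 := Hleib e e.
rewrite ee in H1 H2 H3.
rewrite -H2 -H1 in H3.
by apply: (addrI (d e)); rewrite addr0 -H3.
Qed.

Lemma der_sand a :
  d (bv (arr a)) = lm (bv (t a, [::])) (lm (d (bv (arr a))) (bv (s a, [::]))).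
Proof.
have E : bv (arr a) = lm (bv (t a,[::])) (lm (bv (arr a)) (bv (s a, [::]))).
  by rewrite lmul_e_r /= eqxx lmul_e_l /Defs.tgt /= eqxx.
case: Hd => _ _ HE.
rewrite {1}E (proj1 (HE _ _ (inE_e (t a)))) (proj2 (HE _ _ (inE_e (s a)))).
done.
Qed.

Lemma der_Dl v l : valid (v, l) -> d (bv (v, l)) = Dl (fun a => d (bv (arr a))) v l.
Proof.
elim: l v => [|a l IH] v /=; first by move=> _; rewrite der_e.
rewrite valid_cons => /andP[/eqP Ha Hv].
have -> : bv (v, a :: l) = lm (bv (t a, l)) (bv (v, [:: a])).
  by rewrite lmul_bvec /Defs.tgt /= eqxx.
case: Hd => _ Hleib _.
by rewrite Hleib IH // -Ha.
Qed.

Definition fd : QB := [ffun q => d (bv (arr q.1)) q.2].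

Lemma dA_fd a : dA fd a = d (bv (arr a)).
Proof.
by rewrite [RHS]der_sand sandwich; apply: eq_bigr => g _; rewrite ffunE.
Qed.

Lemma fd_QB : inQB fd.
Proof.
move=> a g Hg; rewrite ffunE /= der_sand sandwich sum_ffunE big1 // => g' Hg'.
rewrite !ffunE; case: eqP => [/val_inj E|_]; last by rewrite /GRing.scale /= mulr0.
by rewrite E Hg' in Hg.
Qed.

Lemma phi_fd x : phi fd x = d x.
Proof.
rewrite /phi [RHS](lin_expand (isDer_lin Hd)); apply: eq_bigr => b _.
congr (_ *: _).
rewrite (Dl_ext _ _ dA_fd).
case: b => [[v l] Hb] /=.
by rewrite der_Dl // (inB_valid (Bseq_inB Hb)).
Qed.

End Der.

Lemma psi1_eval f z b :
  psi1 f (z, b) = (\sum_(q : A * BT) f q *: repl (val z) q.1 (val q.2)) b.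
Proof.
rewrite /psi1 !sum_ffunE; apply: eq_bigr => q _.
rewrite [in LHS]ffunE [in LHS]sum_ffunE (bigD1 z) //= [X in _ + X]big1 ?addr0.
  by rewrite !ffunE /= eqxx.
by move=> p Hp; rewrite ffunE /= eq_sym (negbTE Hp).
Qed.

Lemma fd_ker d : isDer d -> psi1 (fd d) = 0.
Proof.
move=> Hd; apply/ffunP => [[z b]]; rewrite psi1_eval.
case: z => [[zv zl] Hz] /=.
rewrite -Dl_repl; [ | exact: fd_QB | exact: HZvalid Hz].
rewrite (Dl_ext _ _ (dA_fd Hd)) -der_Dl //; last exact: HZvalid Hz.
rewrite bvec_out; last exact: (notB_infix (q := (zv, zl)) Hz (infix_refl _)).
by rewrite (lin0 (isDer_lin Hd)) !ffunE.
Qed.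

Lemma arr_inB a : inB (arr a).
Proof.
rewrite /Defs.inB; apply/andP; split; first by rewrite /Defs.valid /= eqxx.
apply/allP => z Hz; apply/negP => Hi.
have := size_infix Hi; have := HZlen Hz; move=> H1 H2.
by have := leq_trans H1 H2.
Qed.

Lemma phi_arr f a : phi f (bv (arr a)) = dA f a.
Proof.
rewrite phi_bvec arr_inB /= lmul0l add0r.
exact: dA_l.
Qed.

Lemma dA_eval f a g : dA f a g = if par (arr a) (val g) then f (a, g) else 0.
Proof.
rewrite /dA sum_ffunE; case: ifP => H.
  rewrite (bigD1 g) //= big1 ?addr0.
    by rewrite !ffunE eqxx /GRing.scale /= mulr1.
  move=> g' /andP[_ Hg']; rewrite !ffunE; case: eqP => [/val_inj E|_].
    by rewrite E eqxx in Hg'.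
  by rewrite /GRing.scale /= mulr0.
apply: big1 => g' Hg'; rewrite !ffunE; case: eqP => [/val_inj E|_].
  by rewrite E Hg' in H.
by rewrite /GRing.scale /= mulr0.
Qed.

Lemma dA_evalQ f (Hf : inQB f) a g : dA f a g = f (a, g).
Proof. by rewrite dA_eval; case: ifP => // H; rewrite Hf // H. Qed.

Lemma dA_lin c f g a : dA (c *: f + g) a = c *: dA f a + dA g a.
Proof.
rewrite /dA scaler_sumr -big_split; apply: eq_bigr => b _.
by rewrite !ffunE scalerDl scalerA.
Qed.

Lemma phi_linf c f g x : phi (c *: f + g) x = c *: phi f x + phi g x.
Proof.
rewrite /phi scaler_sumr -big_split; apply: eq_bigr => b _.
rewrite (@Dl_lin c (dA f) (dA g)); last exact: dA_lin.
by rewrite scalerDr !scalerA mulrC.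
Qed.

Lemma zid (M : zmodType) (a b c e f g : M) :
  (a + b + (c + e)) - (f + c + (b + g)) = a - f + (e - g).
Proof.
rewrite !opprD !addrA.
rewrite [a + b + c + e - f - c]addrAC [a + b + c + e - c]addrAC addrK.
rewrite [a + b + e - f - b]addrAC [a + b + e - b]addrAC addrK.
by rewrite [a + e - f]addrAC.
Qed.

Lemma der_comm (d1 d2 : Lam -> Lam) : isDer d1 -> isDer d2 ->
  isDer (fun x => d1 (d2 x) - d2 (d1 x)).
Proof.
move=> H1 H2; have L1 := isDer_lin H1; have L2 := isDer_lin H2.
case: H1 => _ P1 E1; case: H2 => _ P2 E2; split.
- move=> c x y; rewrite L2 !L1 L2.
  by rewrite scalerBr opprD addrACA.
- move=> x y; rewrite P2 P1 (linD L1) !P1 (linD L2) !P2.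
  by rewrite lmulBl lmulBr zid.
- move=> e x He; have [E1a E1b] := E1 e x He; have [E2a E2b] := E2 e x He.
  split.
  + by rewrite E2a (proj1 (E1 _ _ He)) E1a (proj1 (E2 _ _ He)) lmulBr.
  + by rewrite E2b (proj2 (E1 _ _ He)) E1b (proj2 (E2 _ _ He)) lmulBl.
Qed.


Lemma sum_fst (F : BT -> k) a :
  \sum_(q : A * BT) (if a == q.1 then F q.2 else 0) = \sum_(b : BT) F b.
Proof.
pose G := fun (b : A) (g : BT) => if a == b then F g else 0.
rewrite (eq_bigr (fun q => G q.1 q.2)); last by case.
rewrite -(pair_bigA _ G) (bigD1 a) //= [X in _ + X]big1 ?addr0.
  by apply: eq_bigr => g _; rewrite /G eqxx.
by move=> b Hb; apply: big1 => g _; rewrite /G eq_sym (negbTE Hb).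
Qed.

Lemma bracket_eval f g a b :
  bracket f g (a, b) = \sum_(q1 : A * BT) \sum_(q2 : A * BT) f q1 * g q2 *
     ((if a == q2.1 then repl (val q2.2) q1.1 (val q1.2) b else 0)
      - (if a == q1.1 then repl (val q1.2) q2.1 (val q2.2) b else 0)).
Proof.
rewrite /bracket sum_ffunE; apply: eq_bigr => q1 _; rewrite sum_ffunE.
by apply: eq_bigr => q2 _; rewrite !ffunE.
Qed.

Lemma phi_bracket f g : inKer f -> inKer g ->
  forall x, phi (bracket f g) x = phi f (phi g x) - phi g (phi f x).
Proof.
move=> Kf Kg; have [Hf Hpf] := Kf; have [Hg Hpg] := Kg.
pose C := fun x => phi f (phi g x) - phi g (phi f x).
have HC : isDer C := der_comm (phi_der Kf) (phi_der Kg).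
move=> x; change (phi (bracket f g) x = C x).
transitivity (\sum_(b : BT) x b *: Dl (dA (bracket f g)) (val b).1 (val b).2); first by [].
rewrite [RHS](lin_expand (isDer_lin HC)); apply: eq_bigr => b _; congr (_ *: _).
case: b => [[v l] Hb] /=.
rewrite (der_Dl HC) ?(inB_valid (Bseq_inB Hb)) //; apply: Dl_ext => a.
rewrite [RHS](der_sand HC) sandwich /dA; apply: eq_bigr => g' _; congr (_ *: _).
rewrite bracket_eval /C !phi_arr.
rewrite [RHS]ffunE [X in _ + X]ffunE /phi !sum_ffunE.
under [X in _ = X - _]eq_bigr => b _ do
  rewrite (dA_evalQ Hg) ffunE (Dl_repl' Hf (inB_valid (BinB b))) sum_ffunE.
under [X in _ = _ - X]eq_bigr => b _ do
  rewrite (dA_evalQ Hf) ffunE (Dl_repl' Hg (inB_valid (BinB b))) sum_ffunE.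
under [X in X = _]eq_bigr => q1 _.
  under eq_bigr => q2 _ do rewrite (mulrBr (f q1 * g q2)).
  rewrite sumrB.
  over.
rewrite sumrB; congr (_ - _).
- rewrite exchange_big /= -(sum_fst _ a); apply: eq_bigr => q2 _.
  case: eqP => E; last by rewrite big1 // => q1 _; rewrite mulr0.
  case: q2 E => a2 b2 /= E; subst a2.
  rewrite scaler_sumr; apply: eq_bigr => q1 _; rewrite !ffunE /GRing.scale /=.
  by rewrite mulrA [f q1 * _]mulrC.
- rewrite -(sum_fst _ a); apply: eq_bigr => q1 _.
  case: eqP => E; last by rewrite big1 // => q2 _; rewrite mulr0.
  case: q1 E => a1 b1 /= E; subst a1.
  rewrite scaler_sumr; apply: eq_bigr => q2 _; rewrite !ffunE /GRing.scale /=.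
  by rewrite mulrA.
Qed.

End Proof.

Unset Implicit Arguments.

Theorem proposition1p8 (k : closedFieldType) (V A : finType) (s t : A -> V)
    (Z : seq (qpath V A)) (N : nat)
    (HZvalid : forall z, z \in Z -> valid s t z)
    (HZlen : forall z, z \in Z -> (2 <= size z.2)%N)
    (HZmin : forall z z', z \in Z -> z' \in Z -> infix z.2 z'.2 -> z = z')
    (HfinB : forall p, inB s t Z p -> (size p.2 < N)%N) :
  exists phi : QB k s t Z N -> (Lam k s t Z N -> Lam k s t Z N),
    [/\ (forall f, inKer f -> isDer (phi f)),
        (forall d, isDer d -> exists2 f, inKer f & phi f =1 d),
        (forall f g, inKer f -> inKer g -> phi f =1 phi g -> f = g),
        (forall (c : k) f g, inKer f -> inKer g ->
           phi (c *: f + g) =1 (fun x => c *: phi f x + phi g x)) &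
        (forall f g, inKer f -> inKer g ->
           phi (bracket f g) =1 (fun x => phi f (phi g x) - phi g (phi f x)))].
Proof.
exists (@phi k V A s t Z N); split.
- by move=> f Kf; apply: (phi_der HfinB HZvalid HZlen).
- move=> d Hd; exists (fd d); last exact: (phi_fd HfinB Hd).
  by split; [exact: (fd_QB HfinB Hd) | exact: (fd_ker HfinB HZvalid Hd)].
- move=> f g [Hf _] [Hg _] H; apply/ffunP => [[a b]].
  by rewrite -(dA_evalQ Hf) -(dA_evalQ Hg) -!(phi_arr HfinB HZlen) H.
- by move=> c f g _ _ x; apply: phi_linf.
- by move=> f g Kf Kg x; apply: (phi_bracket HfinB HZvalid HZlen Kf Kg).
Qed.
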